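(* For every positive integer $n$, $M(n,1)\le \frac{1}{n}\left(2^{n+1}-2\right)$.
   Context: A grain pattern of length $n$ is a subset $E\subseteq\{2,\dots,n\}$ containing no two consecutive integers. For such $E$, $\phi_E:\{0,1\}^n\to\{0,1\}^n$ sends $\mathbf{x}$ to $\mathbf{y}$ with $y_j=x_{j-1}$ if $j\in E$ and $y_j=x_j$ otherwise. $\Phi_t(\mathbf{x})=\{\phi_E(\mathbf{x}): E \text{ a grain pattern of length } n,\ |E|\le t\}$. A code $\mathcal{C}\subseteq\{0,1\}^n$ is $t$-grain-correcting if for any two distinct codewords $\mathbf{x}_1,\mathbf{x}_2$ one has $\Phi_t(\mathbf{x}_1)\cap\Phi_t(\mathbf{x}_2)=\emptyset$. $M(n,t)$ is the maximum cardinality of a $t$-grain-correcting code of length $n$. *)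

(* Defs.v *)
From mathcomp Require Import all_boot.
Set Implicit Arguments. Unset Strict Implicit. Unset Printing Implicit Defensive.

(* Binary words of length n: x : {ffun 'I_n -> bool}; the paper's coordinate
   x_j (j = 1..n) is x (j-1). *)
Definition word n := {ffun 'I_n -> bool}.

(* Grain pattern: E subset of {2,..,n} (0-based: index 0 excluded),
   containing no two consecutive integers. *)
Definition grain_pattern n (E : {set 'I_n}) : bool :=
  [forall i : 'I_n, (i \in E) ==> (nat_of_ord i != 0)] &&
  [forall i : 'I_n, forall j : 'I_n,
     ((i \in E) && (j \in E)) ==> (nat_of_ord j != (nat_of_ord i).+1)].

(* ord_pred_sat j = j-1 (saturating at 0; only used for j in E, so j >= 1). *)
Definition ord_pred_sat n (j : 'I_n) : 'I_n :=
  Ordinal (leq_ltn_trans (leq_pred (nat_of_ord j)) (ltn_ord j)).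

Definition phi n (E : {set 'I_n}) (x : word n) : word n :=
  [ffun j : 'I_n => if j \in E then x (ord_pred_sat j) else x j].

Definition Phi n (t : nat) (x : word n) : {set word n} :=
  [set y | [exists E : {set 'I_n}, [&& grain_pattern E, #|E| <= t & y == phi E x]]].

Definition grain_correcting n (t : nat) (C : {set word n}) : bool :=
  [forall x1 in C, forall x2 in C,
     (x1 != x2) ==> [disjoint Phi t x1 & Phi t x2]].

Definition M (n t : nat) : nat :=
  \max_(C : {set word n} | grain_correcting t C) #|C|.

(* Main.v *)
Require Import Defs.
From mathcomp Require Import all_boot all_order all_algebra zify.
Set Implicit Arguments. Unset Strict Implicit. Unset Printing Implicit Defensive.
Import Order.TTheory GRing.Theory Num.Theory.

Definition trans n (x : word n) (i : 'I_n) : bool :=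
  (0 < i) && (x i != x (ord_pred_sat i)).
Definition tr n (x : word n) : nat := \sum_(i < n) trans x i.

Lemma phi1 n (j : 'I_n) x i :
  phi [set j] x i = if i == j then x (ord_pred_sat j) else x i.
Proof. by rewrite ffunE in_set1; case: eqP => // ->. Qed.

Lemma sum_ind_eq n (j : 'I_n) c : \sum_(i < n) (i == j) * c = c.
Proof.
rewrite (bigD1 j) //= eqxx mul1n big1 ?addn0 // => i /negPf ->; exact: mul0n.
Qed.

Lemma sum_ind_le n (k : nat) c : \sum_(i < n) (nat_of_ord i == k) * c <= c.
Proof.
case: (ltnP k n) => hk.
  rewrite (bigD1 (Ordinal hk)) //= eqxx mul1n big1 ?addn0 // => i.
  by rewrite -val_eqE /= => /negPf ->.
rewrite big1 // => i _; rewrite (_ : (nat_of_ord i == k) = false) //.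
by apply/negbTE; rewrite neq_ltn (leq_trans (ltn_ord i) hk).
Qed.

Lemma tr_phi1 n (x : word n) (j : 'I_n) : 0 < j -> tr (phi [set j] x) <= tr x.
Proof.
move=> j0.
have pw : forall i, trans (phi [set j] x) i + (i == j) * trans x j <=
                    trans x i + (nat_of_ord i == j.+1) * trans x j.
  move=> i; rewrite /trans !phi1.
  have pj : (ord_pred_sat j == j) = false.
    by apply/negbTE/eqP => /(congr1 val) /=; lia.
  case: (eqVneq i j) => [->|nij].
    rewrite (_ : (nat_of_ord j == j.+1) = false); last by apply/negbTE; lia.
    by rewrite pj eqxx andbF mul0n mul1n addn0.
  rewrite mul0n addn0.
  case: (eqVneq (nat_of_ord i) j.+1) => [eij|nij1].
    have -> : ord_pred_sat i = j by apply/val_inj; rewrite /= eij.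
    rewrite eqxx mul1n eij /= j0 /=.
    by case: (x i); case: (x j); case: (x (ord_pred_sat j)).
  have -> : (ord_pred_sat i == j) = false.
    apply/negbTE; rewrite -val_eqE /=.
    case: (nat_of_ord i) nij1 => [|k] /= h; first by rewrite eq_sym -lt0n.
    by apply: contra h => /eqP ->.
  by rewrite mul0n addn0.
have := @leq_sum _ (index_enum 'I_n) xpredT _ _ (fun i _ => pw i).
rewrite !big_split /= sum_ind_eq => h.
rewrite /tr -(leq_add2r (trans x j)); apply: (leq_trans h).
by rewrite leq_add2l sum_ind_le.
Qed.

Lemma phi0 n (x : word n) : phi set0 x = x.
Proof. by apply/ffunP => i; rewrite ffunE in_set0. Qed.

Lemma grain1 n (j : 'I_n) : 0 < j -> grain_pattern [set j].
Proof.
move=> j0; apply/andP; split; apply/forallP => i.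
  by apply/implyP; rewrite in_set1 => /eqP ->; rewrite -lt0n.
apply/forallP => k; apply/implyP; rewrite !in_set1 => /andP[/eqP-> /eqP->].
by apply/negP => /eqP; lia.
Qed.

Lemma grain0 n : grain_pattern (set0 : {set 'I_n}).
Proof.
apply/andP; split; apply/forallP=> i; rewrite ?in_set0 //.
by apply/forallP => k; rewrite in_set0.
Qed.

Lemma inPhi1 n (x y : word n) : y \in Phi 1 x ->
  y = x \/ exists2 j : 'I_n, 0 < j & y = phi [set j] x.
Proof.
rewrite inE => /existsP [E /and3P [gE cE /eqP ->]].
move: cE gE; rewrite leq_eqVlt ltnS leqn0 => /orP [/cards1P [j ->] | /eqP/cards0_eq ->] gE.
  right; exists j => //; move: gE => /andP [/forallP /(_ j) h _]; move: h.
  by rewrite in_set1 eqxx /= lt0n.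
by left; rewrite phi0.
Qed.

Lemma tr_Phi n (x y : word n) : y \in Phi 1 x -> tr y <= tr x.
Proof. by case/inPhi1 => [->|[j j0 ->]] //; apply: tr_phi1. Qed.

Lemma card_Phi n (x : word n) : (tr x).+1 <= #|Phi 1 x|.
Proof.
set T := [set i | trans x i].
have trT : tr x = #|T|.
  rewrite /tr /T -sum1dep_card [RHS]big_mkcond /=; apply: eq_bigr => i _; by case: (trans x i).
pose f := fun j : 'I_n => phi [set j] x.
have fT : forall j, j \in T -> f j j != x j.
  move=> j; rewrite inE /trans => /andP [_ h].
  by rewrite /f phi1 eqxx eq_sym.
have finj : {in T &, injective f}.
  move=> j k jT kT e; apply/eqP; apply: contraT => njk.
  have := fT j jT; rewrite e /f phi1 (negbTE njk).
  by rewrite eqxx.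
have sub : x |: [set f j | j in T] \subset Phi 1 x.
  apply/subsetP => y; rewrite in_setU1 => /orP [/eqP ->|/imsetP [j jT ->]].
    by rewrite inE; apply/existsP; exists set0; rewrite cards0 phi0 eqxx grain0.
  rewrite inE; apply/existsP; exists [set j]; rewrite cards1 /f eqxx andbT /=.
  by rewrite andbT; apply: grain1; move: jT; rewrite inE => /andP [].
apply: leq_trans (subset_leq_card sub).
rewrite cardsU1 card_in_imset // trT.
case: imsetP => // [[j jT e]].
by have := fT j jT; rewrite -e eqxx.
Qed.

Definition ext m (y : word m.+1) (b : bool) : word m.+2 :=
  [ffun i : 'I_m.+2 => if (i : nat) < m.+1 then y (inord i) else b].

Lemma tr_ext m (y : word m.+1) b : tr (ext y b) = tr y + (b != y ord_max).
Proof.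
rewrite /tr big_ord_recr /=; congr (_ + _).
  apply: eq_bigr => i _; rewrite /trans /= !ffunE /= ltn_ord.
  have -> : (i.-1 < m.+1)%N by apply: leq_ltn_trans (leq_pred _) (ltn_ord i).
  have -> : inord i = i by apply/val_inj; rewrite /= inordK.
  have -> : inord i.-1 = ord_pred_sat i.
    by apply/val_inj; rewrite /= inordK //; apply: leq_ltn_trans (leq_pred _) (ltn_ord i).
  by [].
rewrite /trans /= !ffunE /= ltnn ltnSn.
have -> : inord m = (ord_max : 'I_m.+1) by apply/val_inj; rewrite /= inordK.
by [].
Qed.

Local Open Scope ring_scope.

Lemma sum_ext (R : nmodType) m (F : word m.+2 -> R) :
  \sum_(z : word m.+2) F z = \sum_(y : word m.+1) \sum_(b : bool) F (ext y b).
Proof.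
rewrite pair_big /=.
pose g (z : word m.+2) := ([ffun k : 'I_m.+1 => z (widen_ord (leqnSn _) k)], z ord_max).
rewrite (reindex (fun p : word m.+1 * bool => ext p.1 p.2)) //.
apply: onW_bij; exists g.
  move=> [y b]; rewrite /g /=; congr (_, _).
    apply/ffunP => k; rewrite !ffunE /= ltn_ord.
    by congr (y _); apply/val_inj; rewrite /= inordK.
  by rewrite ffunE /= ltnn.
move=> z; apply/ffunP => i; rewrite !ffunE /=.
case: ifP => hi.
  by congr (z _); apply/val_inj; rewrite /= inordK.
f_equal; apply/val_inj => /=; move: (ltn_ord i) hi; lia.
Qed.

Lemma sum_words m (g : nat -> rat) :
  \sum_(y : word m.+1) g (tr y) = 2%:R * \sum_(k < m.+1) 'C(m, k)%:R * g k.
Proof.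
elim: m g => [|m IH] g.
  rewrite big_ord1 bin0 mul1r.
  transitivity (\sum_(y : word 1) g 0%N).
    by apply: eq_bigr => y _; rewrite /tr big_ord1.
  by rewrite sumr_const card_ffun card_bool card_ord mulr_natl.
rewrite sum_ext.
transitivity (\sum_(y : word m.+1) (g (tr y) + g (tr y).+1)).
  apply: eq_bigr => y _; rewrite big_bool !tr_ext.
  by case: (y ord_max) => /=; rewrite addn0 addn1 // addrC.
rewrite big_split /= IH (IH (fun k => g k.+1)) /= -mulrDr; congr (_ * _).
rewrite [RHS]big_ord_recl [X in _ = _ + X](eq_bigr (fun i : 'I_m.+1 =>
   'C(m, i.+1)%:R * g i.+1 + 'C(m, i)%:R * g i.+1)); last first.
  by move=> i _; rewrite lift0 binS natrD mulrDl.
rewrite big_split /= big_ord_recl [X in _ = _ + (X + _)]big_ord_recr /=.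
rewrite (bin_small (ltnSn m)) mulr0n mul0r addr0 !bin0 addrA.
congr (_ + _ + _); apply: eq_bigr => i _; by rewrite lift0.
Qed.

Lemma binsum_nat m : (\sum_(k < m.+1) 'C(m.+1, k.+1) = 2 ^ m.+1 - 1)%N.
Proof.
have := expnDn 1 1 m.+1; rewrite big_ord_recl /= bin0 !exp1n.
under eq_bigr => i _ do rewrite !exp1n muln1.
rewrite (eq_bigr (fun i : 'I_m.+1 => 'C(m.+1, i.+1))); last by move=> i _; rewrite muln1.
by move=> h; rewrite (_ : 2 = 1 + 1)%N // h !muln1 add1n subn1.
Qed.

Lemma binsum m : (m.+1)%:R * \sum_(k < m.+1) 'C(m, k)%:R / (k.+1)%:R
   = (2 ^ m.+1 - 1)%N%:R :> rat.
Proof.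
rewrite -binsum_nat natr_sum mulr_sumr; apply: eq_bigr => k _.
rewrite mulrA -natrM -[(m.+1 * _)%N]/(m.+1 * 'C(m.+1.-1, k))%N mul_bin_diag natrM.
by rewrite (mulrC (k.+1)%:R) mulfK // pnatr_eq0.
Qed.

Definition w n (y : word n) : rat := ((tr y).+1%:R)^-1.

Lemma w_ge0 n (y : word n) : 0 <= w y.
Proof. by rewrite /w invr_ge0 ler0n. Qed.

Lemma Phi_w n (x : word n) : 1 <= \sum_(y in Phi 1 x) w y.
Proof.
have nz : (tr x).+1%:R != 0 :> rat by rewrite pnatr_eq0.
have h : (tr x).+1%:R <= #|Phi 1 x|%:R :> rat by rewrite ler_nat card_Phi.
apply: le_trans (_ : #|Phi 1 x|%:R * ((tr x).+1%:R)^-1 <= _).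
  by rewrite -[X in X <= _](mulfV nz) ler_pM2r // invr_gt0 ltr0n.
rewrite mulr_natl -sumr_const; apply: ler_sum => y yP.
rewrite /w lef_pV2 ?posrE ?ltr0n // ler_nat ltnS; exact: tr_Phi.
Qed.

Lemma code_bound n (C : {set word n}) : grain_correcting 1 C ->
  #|C|%:R <= \sum_(y : word n) w y.
Proof.
move=> gc.
apply: le_trans (_ : \sum_(x in C) \sum_(y in Phi 1 x) w y <= _).
  rewrite -sum1_card natr_sum; apply: ler_sum => x _; exact: Phi_w.
under eq_bigr => x _ do rewrite big_mkcond /=.
rewrite exchange_big /=; apply: ler_sum => y _.
case: (pickP [pred x | (x \in C) && (y \in Phi 1 x)]) => [x0 /andP [x0C yx0] | none].
  rewrite (bigD1 x0) //= yx0 big1 ?addr0 // => x /andP [xC nx].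
  case: ifP => // yx.
  move/forallP: gc => /(_ x) /implyP /(_ xC) /forallP /(_ x0) /implyP /(_ x0C).
  by move=> /implyP /(_ nx) /disjointFr /(_ yx); rewrite yx0.
rewrite big1 ?w_ge0 // => x xC; case: ifP => // yx.
by have := none x; rewrite /= xC yx.
Qed.

Local Close Scope ring_scope.

Theorem corollary3p3 (n : nat) : 0 < n -> n * M n 1 <= 2 ^ n.+1 - 2.
Proof.
case: n => // m _.
set K := 2 ^ m.+2 - 2.
have hC : forall C : {set word m.+1}, grain_correcting 1 C -> #|C| <= K %/ m.+1.
  move=> C gc; rewrite leq_divRL // -(ler_nat rat) natrM.
  have := code_bound gc.
  rewrite /w (sum_words m (fun k => (k.+1%:R)^-1)%R) => h.
  have -> : K = 2 * (2 ^ m.+1 - 1) by rewrite /K expnS mulnBr muln1.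
  rewrite natrM -binsum mulrCA.
  by rewrite [X in (_ <= X)%R]mulrC ler_pM2r ?ltr0n.
apply: leq_trans (_ : m.+1 * (K %/ m.+1) <= K); last by rewrite mulnC leq_trunc_div.
rewrite leq_mul2l; apply/orP; right; apply/bigmax_leqP => C gc; exact: hC.
Qed.
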